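(* Let $L\subseteq\Sigma^*$ be regular and suppose the finite lattice $\mathrm{LQ}(L)$ has length equal to $|J(\mathrm{LQ}(L))|$ (this holds in particular when $\mathrm{LQ}(L)$ is a boolean algebra or, more generally, a distributive lattice). Then $\mathrm{ns}(L)=\mathrm{nsyn}(L)=|J(\mathrm{LQ}(L))|$, and the canonical residual automaton $N_L$ is a subatomic state-minimal nfa for $L$.
   Context: $\mathrm{LQ}(L)$ is the set of finite unions (including $\emptyset$) of left derivatives $u^{-1}L=\{w:uw\in L\}$, ordered by inclusion. $J(S)$ denotes the join-irreducible elements of a finite lattice $S$ (non-bottom $j$ with $j=\bigvee X\Rightarrow j\in X$). The length of a finite lattice is the maximal $n$ of a chain $s_0<s_1<\cdots<s_n$. The canonical residual automaton $N_L$ is the nfa with states $J(\mathrm{LQ}(L))$, transitions $X\xrightarrow{a}Y$ iff $Y\subseteq a^{-1}X$, initial states those $X\subseteq L$, and final states those $X$ with $\epsilon\in X$. $\mathrm{ns}(L)$ is the least number of states of an nfa (several initial states allowed) accepting $L$. An nfa for $L$ is subatomic if all its states accept languages in the boolean algebra generated by the two-sided derivatives $u^{-1}Lv^{-1}=\{w:uwv\in L\}$; $\mathrm{nsyn}(L)$ is the least number of states of a subatomic nfa for $L$. *)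

(* Defs.v *)
From mathcomp Require Import all_boot.
From Stdlib Require List.
Unset Printing Implicit Defensive.

Section Langs.
Variable Sigma : finType.

Definition word := seq Sigma.
Definition lang := word -> bool.

Definition subl (K1 K2 : lang) : Prop := forall w, K1 w -> K2 w.

Definition lder (u : word) (L : lang) : lang := fun w => L (u ++ w).
Definition tder (u v : word) (L : lang) : lang := fun w => L (u ++ w ++ v).

Record dfa := Dfa { dst : finType; dinit : dst; dtrans : dst -> Sigma -> dst; dfin : pred dst }.
Definition dfa_lang (D : dfa) : lang := fun w => dfin D (foldl (dtrans D) (dinit D) w).
Definition regular (L : lang) : Prop := exists D : dfa, dfa_lang D = L.

Record nfa := Nfa { nst : finType; ninit : pred nst; nfin : pred nst;
                    ntrans : nst -> Sigma -> nst -> bool }.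

Fixpoint state_lang (A : nfa) (q : nst A) (w : word) {struct w} : bool :=
  match w with
  | [::] => nfin A q
  | a :: w' => [exists q' : nst A, ntrans A q a q' && state_lang A q' w']
  end.

Definition nfa_lang (A : nfa) : lang := fun w => [exists q : nst A, ninit A q && state_lang A q w].

Inductive bool_gen (G : lang -> Prop) : lang -> Prop :=
| bg_base K : G K -> bool_gen G K
| bg_empty : bool_gen G (fun _ => false)
| bg_compl K : bool_gen G K -> bool_gen G (fun w => ~~ K w)
| bg_union K1 K2 : bool_gen G K1 -> bool_gen G K2 -> bool_gen G (fun w => K1 w || K2 w).

Definition two_sided_ders (L : lang) : lang -> Prop :=
  fun K => exists u v, K = tder u v L.

Definition subatomic (L : lang) (A : nfa) : Prop :=
  forall q : nst A, bool_gen (two_sided_ders L) (state_lang A q).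

Definition ns_is (L : lang) (n : nat) : Prop :=
  (exists A : nfa, nfa_lang A = L /\ #|nst A| = n) /\
  (forall A : nfa, nfa_lang A = L -> n <= #|nst A|).

Definition nsyn_is (L : lang) (n : nat) : Prop :=
  (exists A : nfa, nfa_lang A = L /\ subatomic L A /\ #|nst A| = n) /\
  (forall A : nfa, nfa_lang A = L -> subatomic L A -> n <= #|nst A|).

Definition LQ (L : lang) : lang -> Prop :=
  fun K => exists us : seq word, K = (fun w => has (fun u => lder u L w) us).

Definition is_lub (S : lang -> Prop) (X : lang -> Prop) (j : lang) : Prop :=
  S j /\ (forall x, X x -> subl x j) /\
  (forall k, S k -> (forall x, X x -> subl x k) -> subl j k).

Definition is_bottom (S : lang -> Prop) (b : lang) : Prop :=
  S b /\ forall k, S k -> subl b k.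

Definition join_irr (S : lang -> Prop) (j : lang) : Prop :=
  S j /\ ~ is_bottom S j /\
  forall X : lang -> Prop, (forall x, X x -> S x) -> is_lub S X j -> X j.

Definition chain_of_length (S : lang -> Prop) (s : nat -> lang) (n : nat) : Prop :=
  (forall i, i <= n -> S (s i)) /\
  (forall i, i < n -> subl (s i) (s i.+1) /\ s i <> s i.+1).

Definition lattice_length (S : lang -> Prop) (n : nat) : Prop :=
  (exists s, chain_of_length S s n) /\
  (forall s m, chain_of_length S s m -> m <= n).

Definition card_is (P : lang -> Prop) (n : nat) : Prop :=
  exists l : seq lang, List.NoDup l /\ size l = n /\ forall K, P K <-> List.In K l.

(* A is (a copy of) the canonical residual automaton N_L: its states are in
   bijection, via phi, with J(LQ(L)) and the structure is transported. *)
Definition is_canonical_residual (L : lang) (A : nfa) : Prop :=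
  exists phi : nst A -> lang,
    injective phi /\
    (forall K, join_irr (LQ L) K <-> exists q, phi q = K) /\
    (forall q a q', ntrans A q a q' <-> subl (phi q') (lder [:: a] (phi q))) /\
    (forall q, ninit A q <-> subl (phi q) L) /\
    (forall q, nfin A q <-> phi q [::]).

End Langs.
Arguments subatomic {Sigma}.
Arguments is_canonical_residual {Sigma}.
Arguments nfa_lang {Sigma}.
Arguments nst {Sigma}.
Arguments LQ {Sigma}.
Arguments join_irr {Sigma}.
Arguments ns_is {Sigma}.
Arguments nsyn_is {Sigma}.
Arguments regular {Sigma}.
Arguments lattice_length {Sigma}.
Arguments card_is {Sigma}.

(* Main.v *)
Require Import Defs.
From mathcomp Require Import all_boot.
From Stdlib Require Import Classical ClassicalEpsilon FunctionalExtensionality.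

Set Implicit Arguments.
Unset Strict Implicit.

Definition pb (P : Prop) : bool := if excluded_middle_informative P then true else false.
Lemma pbP (P : Prop) : reflect P (pb P).
Proof. rewrite /pb; case: excluded_middle_informative => h; constructor; done. Qed.

Section Main.
Variable Sigma : finType.
Variable L : lang Sigma.

Lemma lang_ext (K1 K2 : lang Sigma) : subl Sigma K1 K2 -> subl Sigma K2 K1 -> K1 = K2.
Proof.
move=> h1 h2; apply: functional_extensionality => w.
by apply/idP/idP => [/h1|/h2].
Qed.

Lemma neq_wit (x K : lang Sigma) : subl Sigma x K -> x <> K -> exists w, K w /\ ~~ x w.
Proof.
move=> sxK nxK; apply: NNPP => hn; apply: nxK; apply: lang_ext => // w Kw.
by apply: NNPP => /negP nx; apply: hn; exists w.
Qed.

Lemma LQ_empty : LQ L (fun _ => false).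
Proof. by exists [::]. Qed.

Lemma LQ_L : LQ L L.
Proof.
exists [:: [::]]; apply: functional_extensionality => w /=.
by rewrite orbF.
Qed.



Lemma LQ_lder K a : LQ L K -> LQ L (lder Sigma [:: a] K).
Proof.
case=> us ->; exists (map (fun u => rcons u a) us).
apply: functional_extensionality => w; rewrite /lder has_map /=.
by apply: eq_has => u /=; rewrite cat_rcons.
Qed.

Section Measure.
Variable Q : finType.
Variable f : Q -> lang Sigma.
Hypothesis DR : forall u w, lder Sigma u L w -> exists q, subl Sigma (f q) (lder Sigma u L) /\ f q w.

Lemma Rep K : LQ L K -> forall w, K w -> exists q, subl Sigma (f q) K /\ f q w.
Proof.
case=> us -> w /hasP [u uin hu].
have [q [sq fq]] := DR hu; exists q; split => // v /sq hv.
by apply/hasP; exists u.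
Qed.

Definition Sset (K : lang Sigma) := [set q | pb (subl Sigma (f q) K)].

Lemma Sset_proper x K : LQ L K -> subl Sigma x K -> x <> K -> Sset x \proper Sset K.
Proof.
move=> LK sxK nxK; apply/properP; split.
  apply/subsetP => q; rewrite !inE => /pbP h; apply/pbP => v /h; exact: sxK.
have [w [Kw nxw]] := neq_wit sxK nxK.
have [q [sq fq]] := Rep LK Kw.
exists q; rewrite !inE; first by apply/pbP.
apply/pbP => h; move: (h _ fq); by rewrite (negbTE nxw).
Qed.

Lemma chain_bound s m : chain_of_length Sigma (LQ L) s m -> m <= #|Q|.
Proof.
case=> hS hc.
have key : forall i, i <= m -> i <= #|Sset (s i)|.
  elim=> // i IH lt; have [sub neq] := hc i lt.
  have := proper_card (Sset_proper (hS _ lt) sub neq).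
  by move: (IH (ltnW lt)); apply: leq_ltn_trans.
by apply: leq_trans (key m (leqnn m)) (max_card _).
Qed.
End Measure.


Section DFA.
Variable D : dfa Sigma.
Hypothesis HD : dfa_lang Sigma D = L.
Definition fD (q : dst Sigma D) : lang Sigma := fun w => dfin Sigma D (foldl (dtrans Sigma D) q w).
Definition rD u := foldl (dtrans Sigma D) (dinit Sigma D) u.

Lemma lderD u : lder Sigma u L = fD (rD u).
Proof.
by apply: functional_extensionality => w; rewrite -HD /dfa_lang /lder /fD /rD foldl_cat.
Qed.

Lemma DRD u w : lder Sigma u L w -> exists q, subl Sigma (fD q) (lder Sigma u L) /\ fD q w.
Proof. by rewrite lderD => h; exists (rD u); split. Qed.

Lemma reach_list (qs : seq (dst Sigma D)) :
  (forall q, q \in qs -> exists u, q = rD u) ->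
  exists us, forall v, has (fun q => fD q v) qs = has (fun u => lder Sigma u L v) us.
Proof.
elim: qs => [|q qs IH] h; first by exists [::].
have [us hus] := IH (fun q' qin => h q' (mem_behead (s:=q :: qs) qin)).
have [u ->] := h q (mem_head _ _).
exists (u :: us) => v /=; by rewrite hus lderD.
Qed.

Lemma JD m : forall K, #|Sset fD K| < m -> LQ L K -> forall w, K w ->
  exists j, join_irr (LQ L) j /\ subl Sigma j K /\ j w.
Proof.
elim: m => // m IH K hm LK w Kw.
case: (classic (join_irr (LQ L) K)) => hJ; first by exists K; split => //; split => // ?.
have nb : ~ is_bottom Sigma (LQ L) K.
  by rewrite /is_bottom; case=> _ h; move: (h _ LQ_empty w Kw).
have [X hX] : exists X, ~ ((forall x, X x -> LQ L x) -> is_lub Sigma (LQ L) X K -> X K).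
  apply: not_all_ex_not => hall; apply: hJ; split; [done|split; [done|]] => X; exact: hall.
have [XLQ [lubK nXK]] : (forall x, X x -> LQ L x) /\ is_lub Sigma (LQ L) X K /\ ~ X K.
  by apply: NNPP => hn; apply: hX => h1 h2; apply: NNPP => h3; apply: hn.
pose T := [set q | pb (exists u, q = rD u /\ exists x, X x /\ subl Sigma (fD q) x)].
pose k : lang Sigma := fun v => has (fun q => fD q v) (enum T).
have Lk : LQ L k.
  have [us hus] : exists us, forall v, has (fun q => fD q v) (enum T) = has (fun u => lder Sigma u L v) us.
    apply: reach_list => q; rewrite mem_enum inE => /pbP [u [-> _]]; by exists u.
  by exists us; apply: functional_extensionality => v; rewrite /k hus.
have ub : forall x, X x -> subl Sigma x k.
  move=> x Xx v xv.
  have Hx := XLQ x Xx; case: Hx => us Hx.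
  move: (xv); rewrite Hx => /hasP [u uin hu].
  apply/hasP; exists (rD u); first (rewrite mem_enum inE; apply/pbP).
    exists u; split => //; exists x; split => //; rewrite -lderD Hx => y hy.
    by apply/hasP; exists u.
  by rewrite -lderD.
have [_ [xK leastK]] := lubK.
have := leastK k Lk ub w Kw => /hasP [q]; rewrite mem_enum inE => /pbP [u [_ [x [Xx sqx]]]] fqw.
have xw := sqx w fqw.
have nxK : x <> K by move=> e; apply: nXK; rewrite -e.
have := proper_card (Sset_proper DRD LK (xK x Xx) nxK) => lt.
have [j [Jj [sj jw]]] := IH x (leq_trans lt hm) (XLQ x Xx) w xw.
exists j; split => //; split => // v /sj; exact: xK.
Qed.


End DFA.

Section NFA.
Variable A : nfa Sigma.
Hypothesis HA : nfa_lang A = L.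

Fixpoint runs (q : nst A) (u : word Sigma) (q' : nst A) : bool :=
  match u with
  | [::] => q == q'
  | a :: u' => [exists q1, ntrans Sigma A q a q1 && runs q1 u' q']
  end.

Lemma sl_cat q u w : state_lang Sigma A q (u ++ w) = [exists q', runs q u q' && state_lang Sigma A q' w].
Proof.
elim: u q => [|a u IH] q /=.
  apply/idP/existsP => [h|[q' /andP [/eqP <- h]]] //; by exists q; rewrite eqxx.
apply/existsP/existsP => [[q1 /andP [t h]]|[q' /andP [/existsP [q1 /andP [t r]] h]]].
  rewrite IH in h; case/existsP: h => q' /andP [r h]; exists q'; rewrite h andbT.
  by apply/existsP; exists q1; rewrite t r.
by exists q1; rewrite t IH /=; apply/existsP; exists q'; rewrite r h.
Qed.

Lemma DRN u w : lder Sigma u L w ->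
  exists q, subl Sigma (state_lang Sigma A q) (lder Sigma u L) /\ state_lang Sigma A q w.
Proof.
rewrite -HA /lder /nfa_lang => /existsP [q0 /andP [i h]].
rewrite sl_cat in h; case/existsP: h => q /andP [r h]; exists q; split => // v hv.
by apply/existsP; exists q0; rewrite i sl_cat; apply/existsP; exists q; rewrite r hv.
Qed.
End NFA.

Lemma bg_has us : bool_gen Sigma (two_sided_ders Sigma L) (fun w => has (fun u => lder Sigma u L w) us).
Proof.
elim: us => [|u us IH]; first exact: bg_empty.
apply: (bg_union Sigma _ (lder Sigma u L) (fun w => has (fun u => lder Sigma u L w) us)) => //.
apply: bg_base; exists u, [::]; apply: functional_extensionality => w.
by rewrite /tder /lder cats0.
Qed.

Section Canon.
Hypothesis JDH : forall K, LQ L K -> forall w, K w -> exists j, join_irr (LQ L) j /\ subl Sigma j K /\ j w.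
Variable A : nfa Sigma.
Variable phi : nst A -> lang Sigma.
Hypothesis hJ : forall K, join_irr (LQ L) K <-> exists q, phi q = K.
Hypothesis htr : forall q a q', ntrans Sigma A q a q' <-> subl Sigma (phi q') (lder Sigma [:: a] (phi q)).
Hypothesis hinit : forall q, ninit Sigma A q <-> subl Sigma (phi q) L.
Hypothesis hfin : forall q, nfin Sigma A q <-> phi q [::].

Lemma LQphi q : LQ L (phi q).
Proof. by have [_ h] := hJ (phi q); case: (h (ex_intro _ q erefl)). Qed.

Lemma sl_phi q w : state_lang Sigma A q w = phi q w.
Proof.
elim: w q => [|a w IH] q /=.
  by apply/idP/idP => /hfin.
apply/existsP/idP => [[q' /andP [t h]]|h].
  rewrite IH in h; move/htr: t => s; exact: s _ h.
have [j [Jj [sj jw]]] := JDH (LQ_lder a (LQphi q)) (w := w) h.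
have [q' e] := (proj1 (hJ j)) Jj.
exists q'; rewrite IH e jw andbT; apply/htr; rewrite e; exact: sj.
Qed.

Lemma canon_lang : nfa_lang A = L.
Proof.
apply: functional_extensionality => w.
apply/existsP/idP => [[q /andP [i h]]|h].
  rewrite sl_phi in h; move/hinit: i => s; exact: s w h.
have [j [Jj [sj jw]]] := JDH LQ_L h.
have [q e] := (proj1 (hJ j)) Jj.
exists q; rewrite sl_phi e jw andbT; apply/hinit; rewrite e; exact: sj.
Qed.

Lemma canon_sub : subatomic L A.
Proof.
move=> q.
have -> : state_lang Sigma A q = phi q by apply: functional_extensionality => w; exact: sl_phi.
case: (LQphi q) => us ->; exact: bg_has.
Qed.
End Canon.

Lemma size_len (T : Type) (l : seq T) : size l = length l.
Proof. by elim: l => //= x l ->. Qed.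

Lemma card_phi n (Q : finType) (phi : Q -> lang Sigma) : injective phi ->
  (forall K, join_irr (LQ L) K <-> exists q, phi q = K) -> card_is (join_irr (LQ L)) n -> #|Q| = n.
Proof.
move=> inj hJ [l [nd [sz hl]]].
pose d : lang Sigma := fun _ => false.
have g : forall q, {i : 'I_n | List.nth i l d = phi q}.
  move=> q; apply: constructive_indefinite_description.
  have : List.In (phi q) l by apply/hl/hJ; exists q.
  case/(List.In_nth _ _ d) => i [lt e].
  have lt' : i < n by rewrite -sz size_len; apply/ltP.
  by exists (Ordinal lt').
have h : forall i : 'I_n, {q | phi q = List.nth i l d}.
  move=> i; apply: constructive_indefinite_description; apply/hJ/hl.
  apply: List.nth_In; rewrite -size_len sz; apply/ltP; exact: ltn_ord.
apply/eqP; rewrite eqn_leq; apply/andP; split.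
  have := @leq_card _ _ (fun q => sval (g q)).
  rewrite card_ord; apply => q1 q2 e; apply: inj.
  by rewrite -(svalP (g q1)) -(svalP (g q2)) e.
have := @leq_card _ _ (fun i => sval (h i)).
rewrite card_ord; apply => i1 i2 e; apply: val_inj.
have := (proj1 (List.NoDup_nth l d)) nd i1 i2.
rewrite -!size_len sz; apply; try (apply/ltP; exact: ltn_ord).
by rewrite -(svalP (h i1)) -(svalP (h i2)) e.
Qed.

End Main.

Theorem mainTheorem18 (Sigma : finType) (L : lang Sigma) (n : nat) :
  regular L ->
  lattice_length (LQ L) n ->
  card_is (join_irr (LQ L)) n ->
  ns_is L n /\ nsyn_is L n /\
  (exists A : nfa Sigma, is_canonical_residual L A) /\
  (forall A : nfa Sigma, is_canonical_residual L A ->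
     nfa_lang A = L /\ subatomic L A /\ #|nst A| = n).
Proof.
move=> [D HD] [[s hs] _] hcard.
have JDH : forall K, LQ L K -> forall w, K w ->
    exists j, join_irr (LQ L) j /\ subl Sigma j K /\ j w.
  move=> K LK w Kw; exact: (JD HD (ltnSn _) LK Kw).
have lower : forall A : nfa Sigma, nfa_lang A = L -> n <= #|nst A|.
  move=> A HA; exact: (chain_bound (DRN HA) hs).
have facts : forall A : nfa Sigma, is_canonical_residual L A ->
     nfa_lang A = L /\ subatomic L A /\ #|nst A| = n.
  move=> A [phi [inj [hJ [htr [hinit hfin]]]]].
  split; first exact: (canon_lang JDH hJ htr hinit hfin).
  split; first exact: (canon_sub JDH hJ htr hfin).
  exact: (card_phi inj hJ hcard).
have [A0 cA0] : exists A : nfa Sigma, is_canonical_residual L A.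
  case: (hcard) => l [nd [sz hl]].
  pose d : lang Sigma := fun _ => false.
  pose phi := fun i : 'I_n => List.nth i l d.
  exists (Nfa Sigma (ordinal n) (fun i => pb (subl Sigma (phi i) L)) (fun i => phi i [::])
              (fun i a j => pb (subl Sigma (phi j) (lder Sigma [:: a] (phi i))))).
  exists phi; split.
    move=> i1 i2 e; apply: val_inj.
    have := (proj1 (List.NoDup_nth l d)) nd i1 i2.
    rewrite -!size_len sz; apply; try (apply/ltP; exact: ltn_ord); exact: e.
  split.
    move=> K; split.
      move/hl; case/(List.In_nth _ _ d) => i [lt e].
      have lt' : i < n by rewrite -sz size_len; apply/ltP.
      by exists (Ordinal lt').
    case=> i <-; apply/hl; apply: List.nth_In; rewrite -size_len sz; apply/ltP; exact: ltn_ord.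
  split; first by move=> q a q' /=; split => /pbP.
  split; first by move=> q /=; split => /pbP.
  by [].
have [lA [sA cA]] := facts A0 cA0.
split; first by split; [exists A0 | exact: lower].
split; first by split; [exists A0 | move=> A HA _; exact: lower].
split; [by exists A0 | exact: facts].
Qed.
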